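(* Let $\mathcal{C}$ be an $[n,k]_q$ MWS code satisfying property (A). Then $$n\ge\left\lceil\frac{q^{k+2}-3q+2}{4(q-1)}\right\rceil.$$
   Context: Fix a primitive element $\alpha$ of $\mathbb{F}_q$. An $[n,k]_q$ code is a $k$-dimensional subspace of $\mathbb{F}_q^n$ (non-degenerate if $k\ge 2$); it is MWS if it has exactly $\frac{q^k-1}{q-1}$ distinct non-zero Hamming weights. For $c\in\mathbb{F}_q^n$ and $\beta\in\mathbb{F}_q$, $c[\beta]=|\{l:c_l=\beta\}|$. Property (A): there exists $\beta\in\mathbb{F}_q^*$ such that for $a,b\in\mathcal{C}$, $a[\beta]=b[\beta]$ only if $a=b$. *)

(* Defs.v *)
From HB Require Import structures.
From mathcomp Require Import all_boot all_order all_algebra all_field.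
Set Implicit Arguments. Unset Strict Implicit. Unset Printing Implicit Defensive.
Import GRing.Theory.
Local Open Scope ring_scope.

Definition wt (F : finFieldType) (n : nat) (c : 'rV[F]_n) : nat :=
  #|[set i : 'I_n | c 0 i != 0]|.

Definition cnt (F : finFieldType) (n : nat) (c : 'rV[F]_n) (beta : F) : nat :=
  #|[set i : 'I_n | c 0 i == beta]|.

Definition num_nonzero_weights (F : finFieldType) (n : nat)
    (C : {vspace 'rV[F]_n}) : nat :=
  size (undup [seq wt c | c in [pred c : 'rV[F]_n | (c \in C) && (c != 0)]]).

Definition nondeg_code (F : finFieldType) (n : nat) (C : {vspace 'rV[F]_n}) :=
  forall i : 'I_n, exists2 c, c \in C & c 0 i != 0.

Definition MWS (F : finFieldType) (n : nat) (C : {vspace 'rV[F]_n}) : Prop :=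
  num_nonzero_weights C = ((#|F| ^ \dim C - 1) %/ (#|F| - 1))%N.

Definition propertyA (F : finFieldType) (n : nat) (C : {vspace 'rV[F]_n}) : Prop :=
  exists2 beta : F, beta != 0 &
    forall a b, a \in C -> b \in C -> cnt a beta = cnt b beta -> a = b.

Definition ceil_div (a b : nat) : nat := ((a + b - 1) %/ b)%N.

(* Main.v *)
Require Import Defs.
From HB Require Import structures.
From mathcomp Require Import all_boot all_order all_algebra all_field.
From mathcomp Require Import zify.
Set Implicit Arguments. Unset Strict Implicit. Unset Printing Implicit Defensive.
Import GRing.Theory.

Lemma sorted_sum_lb (s : seq nat) (a : nat) :
  sorted ltn s -> (forall y, y \in s -> a <= y) ->
  size s * (size s + 2 * a) <= 2 * (\sum_(x <- s) x) + size s.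
Proof.
elim: s a => [|x s IH] a //= Hs Ha.
have Hx : a <= x by apply: Ha; rewrite inE eqxx.
have Hs' : sorted ltn s by apply: path_sorted Hs.
have Hall : forall y, y \in s -> a.+1 <= y.
  move=> y ys; apply: leq_ltn_trans Hx _.
  have := order_path_min ltn_trans Hs => /allP; exact.
have := IH a.+1 Hs' Hall; rewrite big_cons /=; lia.
Qed.

Lemma uniq_sum_lb (s : seq nat) :
  uniq s -> size s * size s <= 2 * (\sum_(x <- s) x) + size s.
Proof.
move=> us.
have ps : perm_eq (sort leq s) s by rewrite perm_sort perm_refl.
have := @sorted_sum_lb (sort leq s) 0.
rewrite ltn_sorted_uniq_leq sort_uniq us sort_sorted; last exact: leq_total.
rewrite (perm_size ps) (perm_big _ ps) muln0 addn0; apply => //.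
Qed.

Lemma cntE (F : finFieldType) n (c : 'rV[F]_n) b :
  cnt c b = (\sum_(i < n) (c 0%R i == b))%N.
Proof.
by rewrite /cnt -sum1_card big_mkcond; apply: eq_bigr => i _; rewrite inE; case: (_ == _).
Qed.

Section Fiber.
Variables (F : finFieldType) (n : nat) (C : {vspace 'rV[F]_n}).
Local Open Scope ring_scope.

Lemma fiber_bound (i : 'I_n) (b : F) : (b != 0)%R ->
  (#|[set c | (c \in C) && (c 0%R i == b)]| * #|F| <= #|C|)%N.
Proof.
move=> b0.
set S := [set c | _].
have [S0|[c0 c0S]] := set_0Vmem S.
  by rewrite S0 cards0.
move: c0S; rewrite inE => /andP[c0C c0b].
pose T g := [set c | (c \in C) && (c 0 i == g)].
have ST : forall g, (#|S| <= #|T g|)%N.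
  move=> g.
  pose f c := c + ((g - b) / b) *: c0.
  have fi : injective f by move=> x y; rewrite /f => /addIr.
  rewrite -(card_imset _ fi); apply: subset_leq_card; apply/subsetP => y.
  case/imsetP => x; rewrite inE => /andP[xC xb] ->.
  rewrite inE /f rpredD ?rpredZ //= !mxE (eqP xb) (eqP c0b).
  by rewrite divfK // addrC subrK.
have -> : #|C| = \sum_g #|T g|.
  rewrite -sum1_card (partition_big (fun c : 'rV[F]_n => c 0%R i) predT) //.
  apply: eq_bigr => g _; rewrite -sum1_card; apply: eq_bigl => c.
  by rewrite inE.
rewrite mulnC -sum_nat_const; apply: leq_sum => g _; exact: ST.
Qed.
End Fiber.

Theorem mainTheorem11 (F : finFieldType) (n k : nat) (C : {vspace 'rV[F]_n}) :
  (1 <= k)%N ->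
  \dim C = k ->
  ((2 <= k)%N -> nondeg_code C) ->
  MWS C ->
  propertyA C ->
  (ceil_div (#|F| ^ (k + 2) + 2 - 3 * #|F|) (4 * (#|F| - 1)) <= n)%N.
Proof.
move=> k1 dimC _ _ [b b0 Hinj].
set q := #|F|.
have q1 : 1 < q.
  apply/card_gt1P; exists 0%R, 1%R; split => //; by rewrite eq_sym oner_eq0.
have cardC : #|C| = q ^ k by rewrite card_vspace dimC.
set r := q ^ k.-1.
have qr : q ^ k = q * r by rewrite /r -expnS prednK.
have r1 : 0 < r by rewrite expn_gt0; lia.
have sumU : \sum_(c in C) cnt c b <= n * r.
  have -> : \sum_(c in C) cnt c b =
      \sum_(i < n) #|[set c | (c \in C) && (c 0%R i == b)]|.
    rewrite (eq_bigr (fun c : 'rV[F]_n => \sum_(i < n) (c 0%R i == b))%N);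
      last by move=> c _; rewrite cntE.
    rewrite exchange_big /=; apply: eq_bigr => i _.
    rewrite -sum1_card big_mkcond [RHS]big_mkcond /=; apply: eq_bigr => c _.
    by rewrite !inE; case: (c \in C); case: (c 0%R i == b).
  apply: (@leq_trans (\sum_(i < n) r)); last by rewrite sum_nat_const card_ord.
  apply: leq_sum => i _.
  have := fiber_bound C i b0; rewrite cardC qr -/q mulnC leq_pmul2l //; lia.
have sumL : #|C| * #|C| <= 2 * (\sum_(c in C) cnt c b) + #|C|.
  pose s := [seq cnt c b | c <- enum C].
  have us : uniq s.
    rewrite map_inj_in_uniq ?enum_uniq // => x y; rewrite !mem_enum => xC yC.
    exact: Hinj.
  have := uniq_sum_lb us.
  by rewrite size_map -cardE big_map big_enum.
rewrite cardC qr in sumL.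
have key : q * (q * r) <= 2 * n + q.
  have : r * (q * (q * r)) <= r * (2 * n + q) by nia.
  by rewrite leq_pmul2l.
rewrite /ceil_div.
have b4 : 0 < 4 * (q - 1) by lia.
rewrite -ltnS ltn_divLR //.
have -> : q ^ (k + 2) = q * (q * q * r) by rewrite expnD qr; lia.
rewrite mulnA in key.
have hQ : q * q <= q * q * r by rewrite leq_pmulr.
have q2 : 2 <= q by [].
move: hQ key; move: (q * q * r) => Q hQ key.
have h2 : (2 * q - 1) * (q - 2) <= Q * (q - 2) by apply: leq_mul => //; lia.
have h3 : Q * (2 * (q - 1)) <= (2 * n + q) * (2 * (q - 1)).
  by rewrite leq_mul2r key orbT.
have h4 : 2 * 2 <= q * q := leq_mul q2 q2.
have hA : q * 3 <= q * Q by rewrite leq_mul2l; apply/orP; right; lia.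
have [m qm] : exists m, q = m.+2 by exists (q - 2); lia.
move: h2 h3 hA hQ; rewrite qm => h2 h3 hA hQ.
lia.
Qed.
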